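(* Let $(\mathcal W,\rhd)$ be a well-founded frame (over a fixed syntactical $\lambda$-algebra $(\mathcal V,\cdot,[\![-]\!])$). Then $\mathcal I[\bullet(A\to B)]^\eta_p=\mathcal I[\bullet A\to\bullet B]^\eta_p$ holds for all type expressions $A,B$, all hereditary type environments $\eta$ and all $p\in\mathcal W$ if and only if $\rhd$ is locally linear.
   Context: Type expressions: fix a countably infinite set of type variables $X,Y,Z,\dots$. Pseudo type expressions are generated by $A::=X\mid A\to A\mid \bullet A\mid \mu X.A$ ($\mu$ binds $X$; $\alpha$-convertible expressions are identified; $\to$ associates to the right; $\bullet$ binds tighter than $\to$, which binds tighter than $\mu$). $A[B/X]$ denotes capture-avoiding substitution. $\top$ abbreviates $\mu X.\bullet X$, and $\bullet^n A$ denotes $A$ prefixed by $n$ copies of $\bullet$. The tail $t(A)$ is defined by $t(X)=X$, $t(A\to B)=t(B)$, $t(\bullet A)=\bullet t(A)$, $t(\mu X.A)=\mu X.t(A)$; it always has the form $\bullet^{m_0}\mu X_1.\bullet^{m_1}\mu X_2.\cdots\mu X_n.\bullet^{m_n}Y$. $A$ is a $\top$-variant iff $Y=X_i$ for some $1\le i\le n$ with $X_i\notin\{X_{i+1},\dots,X_n\}$ and $m_i+\dots+m_n\ge 1$. $A$ is proper in $X$ iff: a variable $Y$ is proper in $X$ iff $Y\neq X$; $\bullet A$ is always proper in $X$; $A\to B$ is proper in $X$ iff both $A,B$ are proper in $X$ or $B$ is a $\top$-variant; for $Y\ne X$, $\mu Y.A$ is proper in $X$ iff $A$ is proper in $X$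 or $\mu Y.A$ is a $\top$-variant. Type expressions are the least set of pseudo type expressions containing all type variables, closed under $\to$ and $\bullet$, and containing $\mu X.A$ whenever it contains $A$ and $A$ is proper in $X$. Semantics: a syntactical $\lambda$-algebra $(\mathcal V,\cdot,[\![-]\!])$ consists of a nonempty set $\mathcal V$, a map $\cdot:\mathcal V\times\mathcal V\to\mathcal V$, and values $[\![M]\!]_\rho\in\mathcal V$ for untyped $\lambda$-terms $M$ and maps $\rho$ from individual variables to $\mathcal V$, such that $[\![x]\!]_\rho=\rho(x)$, $[\![MN]\!]_\rho=[\![M]\!]_\rho\cdot[\![N]\!]_\rho$, $[\![\lambda x.M]\!]_\rho\cdot v=[\![M]\!]_{\rho[v/x]}$, $[\![M]\!]_\rho$ depends only on $\rho$ restricted to free variables of $M$, and $M=_\beta N$ implies $[\![M]\!]_\rho=[\![N]\!]_\rho$. A well-founded frame is a pair $(\mathcal W,\rhd)$ with $\mathcal W$ nonempty and $\rhd$ a binary relation on $\mathcal W$ admitting no infinite chain $p_0\rhd p_1\rhd p_2\rhd\cdots$; $\trianglerighteq$ denotes the reflexive-transitive closure of $\rhd$. $\rhd$ is locally linear if whenever $p\rhd q$ there is $r$ with $p\trianglerighteq r\rhd q$ such that $r\rhd s$ implies $q\trianglerighteq s$ for all $s$. A $\lambda$A-frame is a well-founded frame whose $\rhd$ is locally linear. A type environment $\eta$ assigns a set $\eta(X)_p\subseteq\mathcal V$ to each type variable $X$ and world $p$; it is hereditary if $p\rhd q$ implies $\eta(X)_p\subseteq\eta(X)_q$. For hereditary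 $\eta$, $\mathcal I[A]^\eta_p\subseteq\mathcal V$ is defined (by well-founded induction on $p$ and the syntactic rank of $A$) by: $\mathcal I[A]^\eta_p=\mathcal V$ if $A$ is a $\top$-variant; otherwise $\mathcal I[X]^\eta_p=\eta(X)_p$; $\mathcal I[\bullet A]^\eta_p=\{u\mid u\in\mathcal I[A]^\eta_q\text{ for all }q\text{ with }p\rhd q\}$; $\mathcal I[A\to B]^\eta_p=\{u\mid \text{for all }q\text{ with }p\trianglerighteq q\text{ and all }v\in\mathcal I[A]^\eta_q,\ u\cdot v\in\mathcal I[B]^\eta_q\}$; $\mathcal I[\mu X.A]^\eta_p=\mathcal I[A[\mu X.A/X]]^\eta_p$. *)

(* Defs.v *)
From Stdlib Require Import Arith Lia Relations Classical ClassicalEpsilon.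
From Stdlib Require Import Transitive_Closure.

Inductive lterm : Type :=
| LVar (n : nat)
| LApp (M N : lterm)
| LLam (M : lterm).

Fixpoint llift (c : nat) (M : lterm) : lterm :=
  match M with
  | LVar n => if c <=? n then LVar (S n) else LVar n
  | LApp M N => LApp (llift c M) (llift c N)
  | LLam M => LLam (llift (S c) M)
  end.

Fixpoint lsubst (k : nat) (U : lterm) (M : lterm) : lterm :=
  match M with
  | LVar n => if n =? k then U else if k <? n then LVar (pred n) else LVar n
  | LApp M N => LApp (lsubst k U M) (lsubst k U N)
  | LLam M => LLam (lsubst (S k) (llift 0 U) M)
  end.

Inductive beta_eq : lterm -> lterm -> Prop :=
| beta_rule M N : beta_eq (LApp (LLam M) N) (lsubst 0 N M)
| beta_refl M : beta_eq M M
| beta_sym M N : beta_eq M N -> beta_eq N M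
| beta_trans M N P : beta_eq M N -> beta_eq N P -> beta_eq M P
| beta_app M M' N N' : beta_eq M M' -> beta_eq N N' -> beta_eq (LApp M N) (LApp M' N')
| beta_lam M M' : beta_eq M M' -> beta_eq (LLam M) (LLam M').

Fixpoint lfree (x : nat) (M : lterm) : Prop :=
  match M with
  | LVar n => x = n
  | LApp M N => lfree x M \/ lfree x N
  | LLam M => lfree (S x) M
  end.

Definition scons {V : Type} (v : V) (rho : nat -> V) : nat -> V :=
  fun n => match n with 0 => v | S n => rho n end.

Record syn_lambda_algebra (V : Type) (app : V -> V -> V)
    (sem : (nat -> V) -> lterm -> V) : Prop := {
  sla_nonempty : inhabited V;
  sla_var : forall rho n, sem rho (LVar n) = rho n;
  sla_app : forall rho M N, sem rho (LApp M N) = app (sem rho M) (sem rho N);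
  sla_lam : forall rho M v, app (sem rho (LLam M)) v = sem (scons v rho) M;
  sla_fv : forall rho rho' M, (forall x, lfree x M -> rho x = rho' x) ->
             sem rho M = sem rho' M;
  sla_beta : forall rho M N, beta_eq M N -> sem rho M = sem rho N
}.

(* R p q  stands for  p |> q *)
Definition no_infinite_chain {W : Type} (R : W -> W -> Prop) : Prop :=
  ~ exists f : nat -> W, forall n, R (f n) (f (S n)).

Definition rtc {W : Type} (R : W -> W -> Prop) : W -> W -> Prop :=
  clos_refl_trans W R.

Definition locally_linear {W : Type} (R : W -> W -> Prop) : Prop :=
  forall p q, R p q ->
    exists r, rtc R p r /\ R r q /\ (forall s, R r s -> rtc R q s).

(* below R q p  :  p |>+ q  (transitive closure) *)
Definition below {W : Type} (R : W -> W -> Prop) : W -> W -> Prop :=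
  clos_trans W (fun q p => R p q).

Lemma nochain_wf {W : Type} (R : W -> W -> Prop) :
  no_infinite_chain R -> well_founded (fun q p => R p q).
Proof.
  intros H p. apply NNPP; intro Hp.
  set (Rf := fun q p => R p q).
  assert (step : forall x : {x : W | ~ Acc Rf x},
             {y : W | ~ Acc Rf y /\ R (proj1_sig x) y}).
  { intros [x Hx]. apply constructive_indefinite_description.
    apply NNPP; intro C. apply Hx. constructor. intros y Hy.
    apply NNPP; intro Hy'. apply C. exists y. split; assumption. }
  set (g := fun x : {x : W | ~ Acc Rf x} =>
              exist (fun y => ~ Acc Rf y) (proj1_sig (step x))
                    (proj1 (proj2_sig (step x)))).
  apply H.
  exists (fun n => proj1_sig (Nat.iter n g (exist (fun y => ~ Acc Rf y) p Hp))).
  intro n. simpl. exact (proj2 (proj2_sig (step _))).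
Qed.

Lemma wf_below {W : Type} (R : W -> W -> Prop) :
  no_infinite_chain R -> well_founded (below R).
Proof. intro H. apply wf_clos_trans. apply nochain_wf. exact H. Qed.

(* Pseudo type expressions (de Bruijn indices, so alpha-equivalent     *)
(* expressions are identical).  TVar n, when free at top level, is the *)
(* n-th type variable.                                                *)

Inductive ty : Type :=
| TVar (n : nat)
| TArr (A B : ty)
| TLat (A : ty)
| TMu (A : ty).        (* mu X. A, X = index 0 in A *)

Fixpoint lift (c : nat) (A : ty) : ty :=
  match A with
  | TVar n => if c <=? n then TVar (S n) else TVar n
  | TArr A B => TArr (lift c A) (lift c B)
  | TLat A => TLat (lift c A)
  | TMu A => TMu (lift (S c) A)
  end.

Fixpoint subst (k : nat) (U : ty) (A : ty) : ty :=
  match A with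
  | TVar n => if n =? k then U else if k <? n then TVar (pred n) else TVar n
  | TArr A B => TArr (subst k U A) (subst k U B)
  | TLat A => TLat (subst k U A)
  | TMu A => TMu (subst (S k) (lift 0 U) A)
  end.

Definition unfold (A : ty) : ty := subst 0 (TMu A) A.

Fixpoint tail (A : ty) : ty :=
  match A with
  | TVar n => TVar n
  | TArr _ B => tail B
  | TLat A => TLat (tail A)
  | TMu A => TMu (tail A)
  end.

(* On a tail  bullet^{m0} mu X1. ... mu Xn. bullet^{mn} Y :
   d = number of mu's passed, g k = "some bullet occurs after the binder
   of index k".  Y is a Top-variant witness iff Y is bound by one of the
   mu's of the tail and some bullet lies between that binder and Y. *)
Fixpoint tv (A : ty) (d : nat) (g : nat -> bool) : bool :=
  match A with
  | TVar k => (k <? d) && g k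
  | TArr _ B => tv B d g
  | TLat A => tv A d (fun _ => true)
  | TMu A => tv A (S d) (fun k => match k with 0 => false | S k => g k end)
  end.

Definition top_variantb (A : ty) : bool := tv (tail A) 0 (fun _ => false).
Definition top_variant (A : ty) : Prop := top_variantb A = true.

Fixpoint proper (A : ty) (x : nat) : Prop :=
  match A with
  | TVar k => k <> x
  | TLat _ => True
  | TArr A B => (proper A x /\ proper B x) \/ top_variant B
  | TMu A0 => proper A0 (S x) \/ top_variant A
  end.

Inductive is_type : ty -> Prop :=
| ty_var n : is_type (TVar n)
| ty_arr A B : is_type A -> is_type B -> is_type (TArr A B)
| ty_lat A : is_type A -> is_type (TLat A)
| ty_mu A : is_type A -> proper A 0 -> is_type (TMu A).

Fixpoint rank (A : ty) : nat :=
  if top_variantb A then 0 else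
  match A with
  | TArr A B => S (Nat.max (rank A) (rank B))
  | TMu A => S (rank A)
  | _ => 0
  end.

(* eta x p = eta(X_x)_p, a subset of V *)
Definition hereditary {W V : Type} (R : W -> W -> Prop)
    (eta : nat -> W -> V -> Prop) : Prop :=
  forall x p q, R p q -> forall v, eta x p v -> eta x q v.

(* interp R Hwf app eta p A = I[A]^eta_p, defined by well-founded recursion
   on p (w.r.t. |>+) and, inside a world, on the rank of A (used as fuel).
   The clause for A -> B quantifies over q with p |>= q, split as q = p or
   p |>+ q. *)
Definition interp {W : Type} (R : W -> W -> Prop) (Hwf : no_infinite_chain R)
    {V : Type} (app : V -> V -> V) (eta : nat -> W -> V -> Prop) :
    W -> ty -> V -> Prop :=
  Fix (wf_below R Hwf) (fun _ => ty -> V -> Prop)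
    (fun p (rec : forall q, below R q p -> ty -> V -> Prop) =>
       let fix go (n : nat) (A : ty) {struct n} : V -> Prop :=
         match n with
         | 0 => fun _ => False
         | S n =>
           if top_variantb A then fun _ => True else
           match A with
           | TVar x => eta x p
           | TLat A => fun u => forall q (H : R p q),
                          rec q (t_step W (fun q p => R p q) q p H) A u
           | TArr A B => fun u =>
               (forall v, go n A v -> go n B (app u v)) /\
               (forall q (H : below R q p) v, rec q H A v -> rec q H B (app u v))
           | TMu A0 => go n (unfold A0)
           end
         end
       in fun A => go (S (rank A)) A).

(* Main.v *)
Require Import Defs.
From Stdlib Require Import Relations Arith Lia Classical FunctionalExtensionality.

Lemma tv_ext : forall T d g g', (forall k, k < d -> g k = g' k) -> tv T d g = tv T d g'.
Proof.
  induction T; intros d g g' H; simpl; auto.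
  - destruct (Nat.ltb_spec n d); simpl; auto.
  - apply IHT. intros [|k] Hk; auto. apply H. lia.
Qed.

Lemma tvb_lat : forall A, top_variantb (TLat A) = top_variantb A.
Proof. intros A. unfold top_variantb. simpl. apply tv_ext. intros; lia. Qed.

Lemma tv_lift : forall A c d g, tv (tail (lift (c + d) A)) d g = tv (tail A) d g.
Proof.
  induction A; intros c d g; simpl; auto.
  - destruct (Nat.leb_spec (c + d) n); simpl; auto.
    destruct (Nat.ltb_spec (S n) d); destruct (Nat.ltb_spec n d); simpl; auto; lia.
  - replace (S (c + d)) with (c + S d) by lia. apply IHA.
Qed.

Lemma tvb_lift : forall A c, top_variantb (lift c A) = top_variantb A.
Proof. intros. unfold top_variantb. rewrite <- (Nat.add_0_r c). apply tv_lift. Qed.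

Lemma tv_subst : forall A k d g U, tv (tail A) d g = true ->
  tv (tail (subst (k + d) U A)) d g = true.
Proof.
  induction A; intros k d g U H; simpl in *; auto.
  - destruct (Nat.ltb_spec n d); simpl in H; try discriminate.
    destruct (Nat.eqb_spec n (k + d)); [lia|].
    destruct (Nat.ltb_spec (k + d) n); [lia|]. simpl.
    destruct (Nat.ltb_spec n d); [exact H|lia].
  - replace (S (k + d)) with (k + S d) by lia. apply IHA. exact H.
Qed.

Lemma tvb_subst : forall A k U, top_variantb A = true -> top_variantb (subst k U A) = true.
Proof. intros. unfold top_variantb in *. rewrite <- (Nat.add_0_r k). apply tv_subst. auto. Qed.

Lemma proper_lift : forall A c x, proper A x -> proper (lift c A) (if c <=? x then S x else x).
Proof.
  induction A; intros c x H; simpl in *.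
  - destruct (Nat.leb_spec c n); destruct (Nat.leb_spec c x); simpl; lia.
  - destruct H as [[H1 H2]|H]; [left; split; auto|right].
    unfold top_variant in *. rewrite tvb_lift. auto.
  - exact I.
  - destruct H as [H|H]; [left|right].
    + specialize (IHA (S c) (S x) H). simpl in IHA.
      destruct (c <=? x); exact IHA.
    + unfold top_variant in *. change (TMu (lift (S c) A)) with (lift c (TMu A)).
      rewrite tvb_lift. auto.
Qed.

Lemma proper_lift_fresh : forall A c, proper (lift c A) c.
Proof.
  induction A; intros c; simpl.
  - destruct (Nat.leb_spec c n); simpl; lia.
  - left; split; auto.
  - exact I.
  - left; auto.
Qed.

Lemma proper_subst : forall A k U x, x <> k -> proper A x ->
  proper U (if k <? x then pred x else x) ->
  proper (subst k U A) (if k <? x then pred x else x).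
Proof.
  induction A; intros k U x Hxk H HU; simpl in *.
  - destruct (Nat.eqb_spec n k); auto.
    destruct (Nat.ltb_spec k n); destruct (Nat.ltb_spec k x); simpl; lia.
  - destruct H as [[H1 H2]|H]; [left; split; auto|right].
    unfold top_variant in *. apply tvb_subst. auto.
  - exact I.
  - destruct H as [H|H]; [left|right].
    + assert (E : S (if k <? x then pred x else x) = if S k <? S x then pred (S x) else S x).
      { destruct (Nat.ltb_spec k x); destruct (Nat.ltb_spec (S k) (S x)); lia. }
      rewrite E. apply IHA; [lia|auto|].
      rewrite <- E. pose proof (proper_lift U 0 _ HU) as HL. simpl in HL. exact HL.
    + unfold top_variant in *. change (TMu (subst (S k) (lift 0 U) A)) with (subst k U (TMu A)).
      apply tvb_subst. auto.
Qed.

Lemma is_type_lift : forall A, is_type A -> forall c, is_type (lift c A).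
Proof.
  induction 1; intros c; simpl.
  - destruct (c <=? n); constructor.
  - constructor; auto.
  - constructor; auto.
  - constructor; auto. pose proof (proper_lift A (S c) 0 H0) as HL. simpl in HL. exact HL.
Qed.

Lemma is_type_subst : forall A, is_type A -> forall k U, is_type U -> is_type (subst k U A).
Proof.
  induction 1; intros k U HU; simpl.
  - destruct (n =? k); auto. destruct (k <? n); constructor.
  - constructor; auto.
  - constructor; auto.
  - constructor. apply IHis_type. apply is_type_lift; auto.
    pose proof (proper_subst A (S k) (lift 0 U) 0 ltac:(lia) H0) as HP. simpl in HP.
    apply HP. apply proper_lift_fresh.
Qed.

Lemma rank_eq : forall A, rank A = if top_variantb A then 0 else
  match A with TArr A B => S (Nat.max (rank A) (rank B)) | TMu A => S (rank A) | _ => 0 end.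
Proof. destruct A; reflexivity. Qed.

Lemma rank_tv : forall A, top_variantb A = true -> rank A = 0.
Proof. intros A H. rewrite rank_eq, H. reflexivity. Qed.

Lemma rank_subst : forall A x U, proper A x -> rank (subst x U A) <= rank A.
Proof.
  induction A; intros x U H.
  - simpl. destruct (n =? x) eqn:E; [apply Nat.eqb_eq in E; simpl in H; lia|].
    destruct (x <? n); rewrite rank_eq; destruct (top_variantb _); simpl; lia.
  - destruct (top_variantb (subst x U (TArr A1 A2))) eqn:E1; [rewrite rank_tv; auto; lia|].
    destruct (top_variantb (TArr A1 A2)) eqn:E2.
    { rewrite tvb_subst in E1; auto; discriminate. }
    simpl in H. destruct H as [[H1 H2]|H]; [|unfold top_variant in H; change (top_variantb (TArr A1 A2)) with (top_variantb A2) in E2; congruence].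
    rewrite (rank_eq (subst x U (TArr A1 A2))), E1, (rank_eq (TArr A1 A2)), E2. simpl.
    specialize (IHA1 x U H1). specialize (IHA2 x U H2). lia.
  - change (rank (TLat (subst x U A)) <= rank (TLat A)). rewrite (rank_eq (TLat (subst x U A))), (rank_eq (TLat A)). destruct (top_variantb _); destruct (top_variantb _); lia.
  - destruct (top_variantb (subst x U (TMu A))) eqn:E1; [rewrite rank_tv; auto; lia|].
    destruct (top_variantb (TMu A)) eqn:E2.
    { rewrite tvb_subst in E1; auto; discriminate. }
    simpl in H. destruct H as [H|H]; [|unfold top_variant in H; congruence].
    rewrite (rank_eq (subst x U (TMu A))), E1, (rank_eq (TMu A)), E2. simpl.
    specialize (IHA (S x) (lift 0 U) H). lia.
Qed.

Section S.
Variable W : Type.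
Variable R : W -> W -> Prop.
Variable Hwf : no_infinite_chain R.
Variable V : Type.
Variable app : V -> V -> V.
Variable eta : nat -> W -> V -> Prop.

Definition G (I : W -> ty -> V -> Prop) (p : W) : nat -> ty -> V -> Prop :=
  fix go (n : nat) (A : ty) {struct n} : V -> Prop :=
    match n with
    | 0 => fun _ => False
    | S n =>
      if top_variantb A then fun _ => True else
      match A with
      | TVar x => eta x p
      | TLat A => fun u => forall q, R p q -> I q A u
      | TArr A B => fun u =>
          (forall v, go n A v -> go n B (app u v)) /\
          (forall q, below R q p -> forall v, I q A v -> I q B (app u v))
      | TMu A0 => go n (unfold A0)
      end
    end.

Notation Int := (interp R Hwf app eta).

Lemma G_S I p n A : G I p (S n) A =
  if top_variantb A then fun _ => True else
      match A with
      | TVar x => eta x p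
      | TLat A => fun u => forall q, R p q -> I q A u
      | TArr A B => fun u =>
          (forall v, G I p n A v -> G I p n B (app u v)) /\
          (forall q, below R q p -> forall v, I q A v -> I q B (app u v))
      | TMu A0 => G I p n (unfold A0)
      end.
Proof. reflexivity. Qed.

Lemma interp_eq p A : Int p A = G Int p (S (rank A)) A.
Proof.
  unfold interp at 1. rewrite Fix_eq. reflexivity.
  intros x f g Hfg.
  assert (f = g) as ->.
  { apply functional_extensionality_dep; intro y.
    apply functional_extensionality_dep; intro h. apply Hfg. }
  reflexivity.
Qed.

Lemma G_adequate p : forall n m A, is_type A -> rank A < n -> rank A < m ->
  forall v, G Int p n A v <-> G Int p m A v.
Proof.
  induction n; intros m A HA Hn Hm v; [lia|]. destruct m; [lia|].
  rewrite !G_S. destruct (top_variantb A) eqn:E; [tauto|].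
  rewrite rank_eq, E in Hn, Hm.
  destruct A; inversion HA; subst; try tauto.
  - assert (rank A1 < n /\ rank A1 < m /\ rank A2 < n /\ rank A2 < m) as (?&?&?&?) by lia.
    split; intros [K1 K2]; split; auto; intros w Hw.
    + apply (IHn m); auto. apply K1. apply (IHn m); auto.
    + apply (IHn m); auto. apply K1. apply (IHn m); auto.
  - pose proof (rank_subst A 0 (TMu A) H1).
    apply IHn; auto. apply is_type_subst; auto. unfold unfold. lia. unfold unfold. lia.
Qed.

Lemma interp_G p A n : is_type A -> rank A < n -> forall v, Int p A v <-> G Int p n A v.
Proof. intros. rewrite interp_eq. apply G_adequate; auto. Qed.

Lemma rank_arr A B : top_variantb (TArr A B) = false -> rank (TArr A B) = S (Nat.max (rank A) (rank B)).
Proof. intros E. rewrite rank_eq, E. reflexivity. Qed.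

Lemma below_rtc q q' : below R q' q -> rtc R q q'.
Proof.
  induction 1.
  - apply rt_step; auto.
  - eapply rt_trans; eauto.
Qed.

Lemma rtc_below q q' : rtc R q q' -> q = q' \/ below R q' q.
Proof.
  induction 1.
  - right; apply t_step; auto.
  - left; auto.
  - destruct IHclos_refl_trans1 as [->|H1]; destruct IHclos_refl_trans2 as [->|H2]; auto.
    right. eapply t_trans; eauto.
Qed.

Lemma var_sem p x v : Int p (TVar x) v <-> eta x p v.
Proof. rewrite interp_eq, G_S. reflexivity. Qed.

Lemma lat_sem p A u : Int p (TLat A) u <-> forall q, R p q -> Int q A u.
Proof.
  rewrite interp_eq, G_S. destruct (top_variantb (TLat A)) eqn:E.
  - rewrite tvb_lat in E. split; auto. intros _ q _. rewrite interp_eq, G_S, E. exact I.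
  - reflexivity.
Qed.

Lemma arr_sem A B q u : is_type A -> is_type B ->
  Int q (TArr A B) u <-> forall q', rtc R q q' -> forall v, Int q' A v -> Int q' B (app u v).
Proof.
  intros HA HB. rewrite interp_eq, G_S. destruct (top_variantb (TArr A B)) eqn:E.
  - change (top_variantb B = true) in E. split; auto. intros _ q' _ v _.
    rewrite interp_eq, G_S, E. exact I.
  - rewrite (rank_arr _ _ E).
    assert (rank A < S (Nat.max (rank A) (rank B))) by lia.
    assert (rank B < S (Nat.max (rank A) (rank B))) by lia.
    split.
    + intros [H1 H2] q' Hq v Hv. destruct (rtc_below _ _ Hq) as [<-|Hb].
      * apply (proj2 (interp_G _ _ _ HB H0 _)). apply H1. apply (proj1 (interp_G _ _ _ HA H _)). auto.
      * apply H2; auto.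
    + intros K. split.
      * intros v Hv. apply (proj1 (interp_G _ _ _ HB H0 _)). apply K. apply rt_refl. apply (proj2 (interp_G _ _ _ HA H _)). auto.
      * intros q' Hb v Hv. apply K; auto. apply below_rtc; auto.
Qed.

Variable Heta : hereditary R eta.

Lemma hered : forall p A, is_type A -> forall q, R p q -> forall v, Int p A v -> Int q A v.
Proof.
  intro p. induction p as [p IHp] using (well_founded_ind (wf_below R Hwf)).
  intros A HA q Hpq v. rewrite !interp_eq. revert A HA v.
  assert (forall n A, is_type A -> rank A < n -> forall v, G Int p n A v -> G Int q n A v) as K.
  2: { intros A HA v. apply K; auto. }
  induction n; intros A HA Hn v; [lia|]. rewrite !G_S.
  destruct (top_variantb A) eqn:E; [auto|].
  rewrite rank_eq, E in Hn.
  destruct A; inversion HA; subst.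
  - apply Heta; auto.
  - intros [K1 K2]. split.
    + intros w Hw. apply (proj1 (interp_G q A2 n ltac:(assumption) ltac:(lia) _)).
      apply K2. apply t_step; auto. apply (proj2 (interp_G q A1 n ltac:(assumption) ltac:(lia) _)); auto.
    + intros q' Hb w Hw. apply K2; auto. eapply t_trans; eauto. apply t_step; auto.
  - intros H q' Hq'. apply (IHp q); auto. apply t_step; auto.
  - apply IHn. apply is_type_subst; auto. pose proof (rank_subst A 0 (TMu A) H1). unfold unfold. lia.
Qed.

Lemma hered_rtc A x y v : is_type A -> rtc R x y -> Int x A v -> Int y A v.
Proof.
  intros HA H. induction H; auto. apply hered; auto.
Qed.

End S.

Lemma below_irrefl {W} (R : W -> W -> Prop) (Hwf : no_infinite_chain R) x : ~ below R x x.
Proof.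
  induction x as [x IH] using (well_founded_ind (wf_below R Hwf)).
  intro H. exact (IH x H H).
Qed.

Lemma rtc_first {W} (R : W -> W -> Prop) p q : rtc R p q -> forall r, R q r ->
  exists q1, R p q1 /\ rtc R q1 r.
Proof.
  induction 1; intros r Hr.
  - exists y; split; auto. apply rt_step; auto.
  - exists r; split; auto. apply rt_refl.
  - destruct (IHclos_refl_trans2 r Hr) as [q1 [H1 H2]].
    destruct (IHclos_refl_trans1 q1 H1) as [q2 [H3 H4]].
    exists q2; split; auto. eapply rt_trans; eauto.
Qed.

Lemma rtc_last {W} (R : W -> W -> Prop) q q' : rtc R q q' -> forall p, R p q ->
  exists s, rtc R p s /\ R s q'.
Proof.
  induction 1; intros p Hp.
  - exists x; split; auto. apply rt_step; auto.
  - exists p; split; auto. apply rt_refl.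
  - destruct (IHclos_refl_trans1 p Hp) as [s [H1 H2]].
    destruct (IHclos_refl_trans2 s H2) as [s2 [H3 H4]].
    exists s2; split; auto. eapply rt_trans; eauto.
Qed.

Theorem theorem3 (V : Type) (app : V -> V -> V) (sem : (nat -> V) -> lterm -> V)
  (HV : syn_lambda_algebra V app sem)
  (W : Type) (R : W -> W -> Prop) (HW : inhabited W) (Hwf : no_infinite_chain R) :
  (forall A B : ty, is_type A -> is_type B ->
   forall eta : nat -> W -> V -> Prop, hereditary R eta ->
   forall (p : W) (u : V),
     interp R Hwf app eta p (TLat (TArr A B)) u <->
     interp R Hwf app eta p (TArr (TLat A) (TLat B)) u)
  <-> locally_linear R.
Proof.
  split.
  - intros Heq p q Hpq. apply NNPP; intro Hn.
    destruct (sla_nonempty _ _ _ HV) as [v0].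
    set (eta := fun (x : nat) (w : W) (_ : V) =>
                  match x with 0 => rtc R q w | _ => ~ rtc R w q end).
    assert (Heta : hereditary R eta).
    { intros [|x] w w' Hw v; simpl.
      - intro H. eapply rt_trans; eauto. apply rt_step; auto.
      - intros H1 H2. apply H1. eapply rt_trans; eauto. apply rt_step; auto. }
    assert (Hu : interp R Hwf app eta p (TArr (TLat (TVar 0)) (TLat (TVar 1))) v0).
    { apply arr_sem; try repeat constructor.
      intros r Hpr v Hv. rewrite lat_sem in Hv |- *. intros s Hrs.
      apply var_sem. simpl. intro Hsq.
      assert (Hall : forall s', R r s' -> rtc R q s').
      { intros s' Hs'. specialize (Hv s' Hs'). apply var_sem in Hv. exact Hv. }
      assert (s = q) as ->.
      { pose proof (Hall s Hrs) as Hqs.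
        destruct (rtc_below W R _ _ Hqs) as [->|H1]; auto.
        destruct (rtc_below W R _ _ Hsq) as [->|H2]; auto.
        exfalso. apply (below_irrefl R Hwf q). eapply t_trans; eauto. }
      apply Hn. exists r; split; [auto|split; auto]. }
    apply (proj2 (Heq _ _ (ty_var 0) (ty_var 1) eta Heta p v0)) in Hu.
    rewrite lat_sem in Hu. specialize (Hu q Hpq).
    rewrite arr_sem in Hu; try constructor.
    specialize (Hu q (rt_refl _ _ _) v0).
    rewrite !var_sem in Hu. simpl in Hu. apply Hu; apply rt_refl.
  - intros LL A B HA HB eta Heta p u.
    rewrite lat_sem, (arr_sem W R Hwf V app eta (TLat A) (TLat B)) by (constructor; auto). split.
    + intros H q Hpq v Hv. rewrite lat_sem in Hv |- *. intros r Hqr.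
      destruct (rtc_first R p q Hpq r Hqr) as [q1 [H1 H2]].
      specialize (H q1 H1). rewrite arr_sem in H by auto.
      apply H; auto.
    + intros H q Hpq. rewrite arr_sem by auto. intros q' Hqq' v Hv.
      destruct (rtc_last R q q' Hqq' p Hpq) as [s [Hps Hsq']].
      destruct (LL s q' Hsq') as [r [Hsr [Hrq' Hr]]].
      assert (Hpr : rtc R p r) by (eapply rt_trans; eauto).
      specialize (H r Hpr v).
      rewrite !lat_sem in H. apply H; auto.
      intros t Hrt. apply (hered_rtc W R Hwf V app eta Heta A q' t v HA (Hr t Hrt) Hv).
Qed.
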